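(* Let $p,q\geq 2$ be relatively prime integers, let $c,c'\in A_{pq}^{\mathbb{Z}}$ and $k>0$. If $\mathrm{tr}_{p,q}(c,k)(i)=\mathrm{tr}_{p,q}(c',k)(i)$ for all $-(k-1)\leq i\leq k-1$, then $c(j)=c'(j)$ for all $1\leq j\leq k$.
   Context: For an integer $n>1$, $A_n=\{0,1,\dots,n-1\}$. For relatively prime integers $p,q\geq2$ define $g_{p,q}:A_{pq}\times A_{pq}\to A_{pq}$ by writing $x=x_1q+x_0$, $y=y_1q+y_0$ with $x_0,y_0\in A_q$, $x_1,y_1\in A_p$ (uniquely), and setting $g_{p,q}(x,y)=x_0p+y_1$. Define $F_{p,q}:A_{pq}^{\mathbb{Z}}\to A_{pq}^{\mathbb{Z}}$ by $F_{p,q}(c)(i)=g_{p,q}\big(g_{p,q}(c(i-1),c(i)),\,g_{p,q}(c(i),c(i+1))\big)$. The map $F_{p,q}$ is a bijection with inverse $F_{q,p}$ (same formulas with $p,q$ exchanged), so $F_{p,q}^n$ is defined for all $n\in\mathbb{Z}$. The $k$-trace of $c$ is the sequence $\mathrm{tr}_{p,q}(c,k)=(F_{p,q}^n(c)(k))_{n\in\mathbb{Z}}$. *)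

(* Defs.v *)
From Stdlib Require Import ZArith.
From mathcomp Require Import all_boot.
Set Implicit Arguments. Unset Strict Implicit. Unset Printing Implicit Defensive.

(* A configuration c : A_{pq}^Z is represented as a function Z -> nat whose
   values lie in A_{pq} = {0,...,pq-1}; see [config]. *)
Definition config (p q : nat) (c : Z -> nat) : Prop := forall i, c i < p * q.

(* g_{p,q}(x,y) = x0 * p + y1 where x = x1 q + x0, y = y1 q + y0,
   x0,y0 in A_q, x1,y1 in A_p (for x,y in A_pq: x0 = x mod q, y1 = y div q). *)
Definition g (p q : nat) (x y : nat) : nat := (x %% q) * p + y %/ q.

Definition F (p q : nat) (c : Z -> nat) : Z -> nat :=
  fun i => g p q (g p q (c (i - 1)%Z) (c i)) (g p q (c i) (c (i + 1)%Z)).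

(* F_{p,q}^n for n in Z: nonnegative powers iterate F_{p,q}, negative powers
   iterate the inverse F_{q,p}. *)
Definition Fpow (p q : nat) (n : Z) (c : Z -> nat) : Z -> nat :=
  match n with
  | Z0 => c
  | Zpos m => ssrnat.iter (Pos.to_nat m) (F p q) c
  | Zneg m => ssrnat.iter (Pos.to_nat m) (F q p) c
  end.

Definition trace (p q : nat) (c : Z -> nat) (k : Z) : Z -> nat :=
  fun n => Fpow p q n c k.

(* Main.v *)
Require Import Defs.
From Stdlib Require Import ZArith Lia FunctionalExtensionality.
From mathcomp Require Import all_boot zify.
Set Implicit Arguments. Unset Strict Implicit.

Lemma mod_cancel (p q a b : nat) : coprime q p -> a < q -> b < q ->
  a * p = b * p %[mod q] -> a = b.
Proof.
move=> cop ha hb.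
wlog ab : a b ha hb / a <= b.
  move=> H E; case: (leqP a b) => h; first exact: H.
  symmetry; apply: H => //.
  exact: ltnW.
move=> /eqP E; rewrite eq_sym eqn_mod_dvd in E; last by rewrite leq_mul2r ab orbT.
rewrite -mulnBl Gauss_dvdl // in E.
have: b - a < q by lia.
move: E => /dvdnP [k Hk]; rewrite Hk.
case: k Hk => [|k] Hk; first by move=> _; lia.
move=> h; nia.
Qed.

Lemma g_div (p q x y : nat) : 0 < p -> 0 < q -> y < p * q -> g p q x y %/ p = x %% q.
Proof.
move=> hp hq hy; rewrite /g divnMDl // divn_small ?addn0 //.
by rewrite ltn_divLR // mulnC.
Qed.

Lemma g_lt (p q x y : nat) : 0 < p -> 0 < q -> y < p * q -> g p q x y < q * p.
Proof.
move=> hp hq hy; rewrite /g.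
have h1 : x %% q < q by rewrite ltn_mod.
have h2 : y %/ q < p by rewrite ltn_divLR // mulnC.
nia.
Qed.

Lemma config_sym p q c : config p q c -> config q p c.
Proof. by move=> h i; rewrite mulnC. Qed.

Definition Phi p q (c : Z -> nat) : Z -> nat := fun i => g p q (c (i - 1)%Z) (c i).
Definition L (c : Z -> nat) : Z -> nat := fun i => c (i + 1)%Z.
Definition S (c : Z -> nat) : Z -> nat := fun i => c (i - 1)%Z.

Lemma LS c : L (S c) = c.
Proof. apply: functional_extensionality => i; rewrite /L /S; f_equal; lia. Qed.
Lemma PhiL p q c : Phi p q (L c) = L (Phi p q c).
Proof. apply: functional_extensionality => i; rewrite /L /Phi; do 2 f_equal; lia. Qed.
Lemma PhiS p q c : Phi p q (S c) = S (Phi p q c).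
Proof. apply: functional_extensionality => i; rewrite /S /Phi; do 2 f_equal; lia. Qed.
Lemma F_Phi p q c : F p q c = L (Phi p q (Phi p q c)).
Proof.
apply: functional_extensionality => i; rewrite /F /L /Phi.
by have -> : (i + 1 - 1 = i)%Z by lia.
Qed.

Lemma config_Phi p q c : 0 < p -> 0 < q -> config p q c -> config q p (Phi p q c).
Proof. move=> hp hq hc i; exact: g_lt. Qed.

Lemma PhiK p q c : 0 < p -> 0 < q -> config p q c -> Phi q p (Phi p q c) = S c.
Proof.
move=> hp hq hc; apply: functional_extensionality => j.
rewrite /Phi /S {1}/g.
rewrite g_div //.
rewrite /g modnMDl modn_small; last by rewrite ltn_divLR // mulnC.
by rewrite -divn_eq.
Qed.

Lemma config_F p q c : 0 < p -> 0 < q -> config p q c -> config p q (F p q c).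
Proof.
move=> hp hq hc; rewrite F_Phi => i; rewrite /L.
by have := config_Phi hp hq (config_sym (config_Phi hp hq hc)) (i+1)%Z; rewrite mulnC.
Qed.

Lemma FK p q c : 0 < p -> 0 < q -> config p q c -> F q p (F p q c) = c.
Proof.
move=> hp hq hc.
have hc1 := config_sym (config_Phi hp hq hc).
have hc2 := config_Phi hp hq hc1.
rewrite !F_Phi !PhiL PhiK // PhiS PhiK // LS; exact: LS.
Qed.


Lemma config_iter p q c n : 0 < p -> 0 < q -> config p q c -> config p q (iter n (F p q) c).
Proof. move=> hp hq hc; elim: n => [|n IH] //=; exact: config_F. Qed.

Lemma Fpow_nat p q m c : Fpow p q (Z.of_nat m) c = iter m (F p q) c.
Proof. case: m => [|m] //=. by rewrite SuccNat2Pos.id_succ. Qed.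
Lemma Fpow_opp p q n c : Fpow q p (- n) c = Fpow p q n c.
Proof. by case: n. Qed.

Lemma Fpow_cases (n : Z) : exists m, n = Z.of_nat m \/ n = (- Z.of_nat m)%Z.
Proof. exists (Z.abs_nat n); lia. Qed.

Lemma config_Fpow p q n c : 0 < p -> 0 < q -> config p q c -> config p q (Fpow p q n c).
Proof.
move=> hp hq hc; have [m [->| ->]] := Fpow_cases n.
  rewrite Fpow_nat; exact: config_iter.
rewrite (@Fpow_opp q p) Fpow_nat; apply: config_sym.
apply: config_iter => //; exact: config_sym.
Qed.

Lemma Fpow_succ p q n c : 0 < p -> 0 < q -> config p q c ->
  Fpow p q (n + 1) c = F p q (Fpow p q n c).
Proof.
move=> hp hq hc; have [m [->| ->]] := Fpow_cases n.
  have -> : (Z.of_nat m + 1 = Z.of_nat m.+1)%Z by lia.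
  by rewrite !Fpow_nat.
case: m => [|m]; first by [].
have -> : (- Z.of_nat m.+1 + 1 = - Z.of_nat m)%Z by lia.
rewrite (@Fpow_opp q p) Fpow_nat.
rewrite (@Fpow_opp q p) Fpow_nat.
rewrite iterS FK //; apply: config_iter => //; exact: config_sym.
Qed.

Lemma Fpow_pred p q n c : 0 < p -> 0 < q -> config p q c ->
  Fpow p q (n - 1) c = F q p (Fpow p q n c).
Proof.
move=> hp hq hc.
rewrite -(@Fpow_opp p q) -(@Fpow_opp p q n).
have -> : (- (n - 1) = - n + 1)%Z by lia.
apply: Fpow_succ => //; exact: config_sym.
Qed.

Lemma local_mod p q d d' i : 0 < p -> 0 < q -> coprime q p ->
  config p q d -> config p q d' -> d i = d' i -> F p q d i = F p q d' i ->
  d (i - 1)%Z = d' (i - 1)%Z %[mod q].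
Proof.
move=> hp hq cop hd hd' E EF.
have: F p q d i %/ p = F p q d' i %/ p by rewrite EF.
rewrite /F !g_div //; try by rewrite mulnC; apply: g_lt.
rewrite /g E => /eqP; rewrite eqn_modDr => /eqP H.
rewrite -(modn_mod (d _)) -(modn_mod (d' _)).
congr (_ %% q); apply: mod_cancel H => //; exact: ltn_pmod.
Qed.

Lemma local p q d d' i : 0 < p -> 0 < q -> coprime p q ->
  config p q d -> config p q d' -> d i = d' i -> F p q d i = F p q d' i ->
  F q p d i = F q p d' i -> d (i - 1)%Z = d' (i - 1)%Z.
Proof.
move=> hp hq cop hd hd' E EF EF'.
have cop' : coprime q p by rewrite coprime_sym.
have h1 := local_mod hp hq cop' hd hd' E EF.
have h2 := local_mod hq hp cop (config_sym hd) (config_sym hd') E EF'.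
have: d (i - 1)%Z == d' (i - 1)%Z %[mod p * q].
  by rewrite chinese_remainder // h2 h1 !eqxx.
rewrite !modn_small ?hd ?hd' //; first by move/eqP.
Qed.

Theorem corollary1 (p q : nat) (c c' : Z -> nat) (k : Z) :
  2 <= p -> 2 <= q -> coprime p q ->
  config p q c -> config p q c' ->
  (0 < k)%Z ->
  (forall i : Z, (- (k - 1) <= i <= k - 1)%Z -> trace p q c k i = trace p q c' k i) ->
  forall j : Z, (1 <= j <= k)%Z -> c j = c' j.
Proof.
move=> hp2 hq2 cop hc hc' hk H.
have hp : 0 < p by lia.
have hq : 0 < q by lia.
have P : forall t : nat, forall n : Z, (Z.abs n + Z.of_nat t <= k - 1)%Z ->
    Fpow p q n c (k - Z.of_nat t)%Z = Fpow p q n c' (k - Z.of_nat t)%Z.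
  elim=> [|t IH] n hn.
    have -> : (k - Z.of_nat 0 = k)%Z by lia.
    apply: H; lia.
  have -> : (k - Z.of_nat t.+1 = (k - Z.of_nat t) - 1)%Z by lia.
  apply: (@local p q) => //; try exact: config_Fpow.
  - apply: IH; lia.
  - rewrite -!Fpow_succ //; apply: IH; lia.
  - rewrite -!Fpow_pred //; apply: IH; lia.
move=> j hj.
have := P (Z.to_nat (k - j)) 0%Z ltac:(lia).
by have -> : (k - Z.of_nat (Z.to_nat (k - j)) = j)%Z by lia.
Qed.
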